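(* For every integer $n\ge 2$, every independent set of the hypergraph $\mathtt{H}^{n}_{1}(\{0,1,2\})$ has size at most $\frac{2}{3}\cdot 3^n$.
   Context: $\mathtt{H}^{n}_{1}(\{0,1,2\})$ is the $3$-uniform hypergraph with vertex set $\{0,1,2\}^n$ in which three distinct vertices $\mathbf{x}^1,\mathbf{x}^2,\mathbf{x}^3$ form a hyperedge iff $\sum_{i=1}^n \big|\{0,1,2\}\setminus\{\mathbf{x}^1_i,\mathbf{x}^2_i,\mathbf{x}^3_i\}\big| \le 1$. An independent set is a set of vertices containing no hyperedge. *)

(* Defs.v *)
From mathcomp Require Import all_boot.
Set Implicit Arguments. Unset Strict Implicit. Unset Printing Implicit Defensive.

Definition vtx (n : nat) := {ffun 'I_n -> 'I_3}.

Definition missing n (x y z : vtx n) (i : 'I_n) : nat :=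
  #|[set: 'I_3] :\: [set x i; y i; z i]|.

Definition hedge n (x y z : vtx n) : bool :=
  [&& x != y, y != z, x != z & \sum_(i < n) missing x y z i <= 1].

Definition independent n (A : {set vtx n}) : bool :=
  [forall x in A, forall y in A, forall z in A, ~~ hedge x y z].

(* Main.v *)
Require Import Defs.
From mathcomp Require Import all_boot zify.

Definition succ3 (j : 'I_3) : 'I_3 := inord ((j + 1) %% 3).

Lemma succ3_cover (a j : 'I_3) : j \in [set a; succ3 a; succ3 (succ3 a)].
Proof.
rewrite !inE.
case: a => [[|[|[|a]]] Ha] //; case: j => [[|[|[|j]]] Hj] //;
  rewrite /succ3 /= ?inordK //=; by apply/orP; (left + right); apply/eqP; apply/val_inj; rewrite /= ?inordK.
Qed.

Lemma succ3_neq (a : 'I_3) : a != succ3 a.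
Proof.
case: a => [[|[|[|a]]] Ha] //; rewrite /succ3 /=; apply/eqP => /(congr1 val) /=;
  rewrite inordK //.
Qed.

Lemma succ3_inj : injective succ3.
Proof.
move=> a b.
case: a => [[|[|[|a]]] Ha] //; case: b => [[|[|[|b]]] Hb] //;
  rewrite /succ3 /= => /(congr1 val) /=; rewrite !inordK //= => H;
  apply/val_inj => //=; discriminate.
Qed.

Definition shift {n} (x : vtx n) : vtx n := [ffun i => succ3 (x i)].

Lemma shift_inj n : injective (@shift n).
Proof.
move=> x y /ffunP H; apply/ffunP => i; have := H i; rewrite !ffunE; exact: succ3_inj.
Qed.

Lemma hedge_shift n (hn : 0 < n) (x : vtx n) : hedge x (shift x) (shift (shift x)).
Proof.
have neq : forall y : vtx n, y != shift y.
  move=> y; apply/eqP => /ffunP /(_ (Ordinal hn)); rewrite ffunE => E.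
  by move: (succ3_neq (y (Ordinal hn))); rewrite -E eqxx.
apply/and4P; split.
- exact: neq.
- exact: neq.
- apply/eqP => /ffunP /(_ (Ordinal hn)); rewrite !ffunE => E.
  set a := x _ in E.
  by move: E; case: a => [[|[|[|a]]] Ha] //; rewrite /succ3 /= => /(congr1 val) /=;
    rewrite !inordK.
- rewrite big1 // => i _.
  rewrite /missing !ffunE; apply/eqP; rewrite cards_eq0 setD_eq0.
  by apply/subsetP => j _; apply: succ3_cover.
Qed.

Theorem fact3p3 (n : nat) (hn : 2 <= n) (A : {set vtx n}) :
  independent A -> 3 * #|A| <= 2 * 3 ^ n.
Proof.
move=> /forallP indep.
have hn0 : 0 < n by apply: leq_trans hn.
have cardA : forall h : vtx n -> vtx n, injective h ->
    #|A| = \sum_(x : vtx n) (h x \in A).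
  move=> h hi; rewrite -sum1_card big_mkcond /= (reindex_inj hi) /=.
  by apply: eq_bigr => x _; case: (h x \in A).
have -> : 3 * #|A| = \sum_(x : vtx n)
    ((x \in A) + (shift x \in A) + (shift (shift x) \in A)).
  rewrite !big_split /= -(cardA id) // -(cardA _ (@shift_inj n)).
  rewrite -(cardA (fun x => shift (shift x))); first by rewrite mulSn mul2n -addnn addnA.
  by move=> a b /shift_inj /shift_inj.
have -> : 3 ^ n = #|{: vtx n}|.
  by rewrite /vtx card_ffun !card_ord.
rewrite mulnC -sum_nat_const.
apply: leq_sum => x _.
case Hx: (x \in A); case Hy: (shift x \in A); case Hz: (shift (shift x) \in A) => //.
have := indep x; rewrite Hx /= => /forallP /(_ (shift x)); rewrite Hy /=.
move=> /forallP /(_ (shift (shift x))); rewrite Hz /=.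
by rewrite hedge_shift.
Qed.
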